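(* The generic offset polynomial $g(d,\bar x)$ is primitive with respect to $\bar x=(x_1,x_2,x_3)$, i.e. it has no non-constant factor in $\mathbb C[d]$.
   Context: Let $f\in\mathbb C[y_1,y_2,y_3]$ be irreducible, defining a surface $\Sigma$; $f_i=\partial f/\partial y_i$, $h_{\rm imp}=\sum f_i^2$, not identically zero on $\Sigma$. The generic offset $\mathcal O_d(\Sigma)\subset\mathbb C^4$ is the Zariski closure of the projection to $(d,\bar x)$ of the solution set in $(d,\bar x,\bar y,u)$ of: $f(\bar y)=0$; $f_i(\bar y)(x_j-y_j)-f_j(\bar y)(x_i-y_i)=0$ ($i<j$); $\sum_i(x_i-y_i)^2-d^2=0$; $u\,h_{\rm imp}(\bar y)-1=0$. It is a hypersurface, and its square-free defining polynomial $g(d,\bar x)\in\mathbb C[d,\bar x]$ is the generic offset polynomial. *)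

(* Defs.v *)
From HB Require Import structures.
From mathcomp Require Import all_boot all_order all_algebra.
Set Implicit Arguments. Unset Strict Implicit. Unset Printing Implicit Defensive.
Import Order.TTheory GRing.Theory.
Local Open Scope ring_scope.

(* R[y1,y2,y3]: innermost variable y1, middle y2, outermost y3. *)
Definition poly3 (R : nzRingType) := {poly {poly {poly R}}}.
(* R[d,x1,x2,x3]: innermost d, then x1, x2, outermost x3. *)
Definition poly4 (R : nzRingType) := {poly {poly {poly {poly R}}}}.

Definition eval3 (R : comNzRingType) (p : {poly {poly {poly R}}}) (y1 y2 y3 : R) : R :=
  ((p.[y3%:P%:P]).[y2%:P]).[y1].

Definition eval4 (R : comNzRingType) (p : {poly {poly {poly {poly R}}}})
    (d x1 x2 x3 : R) : R :=
  (((p.[x3%:P%:P%:P]).[x2%:P%:P]).[x1%:P]).[d].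

Definition pd1 (R : nzRingType) (p : {poly {poly {poly R}}}) : {poly {poly {poly R}}} :=
  map_poly (map_poly (@deriv R)) p.
Definition pd2 (R : nzRingType) (p : {poly {poly {poly R}}}) : {poly {poly {poly R}}} :=
  map_poly (@deriv {poly R}) p.
Definition pd3 (R : nzRingType) (p : {poly {poly {poly R}}}) : {poly {poly {poly R}}} :=
  deriv p.

Definition irreducible_elt (A : comUnitRingType) (f : A) : Prop :=
  f != 0 /\ f \isn't a GRing.unit /\
  forall a b : A, f = a * b -> a \is a GRing.unit \/ b \is a GRing.unit.

(* ring divisibility (not the pseudo-division %| of polydiv) *)
Definition rdvd (A : comNzRingType) (a b : A) : Prop := exists r : A, b = a * r.

Definition offset_incidence (R : comUnitRingType) (f : {poly {poly {poly R}}})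
    (d x1 x2 x3 : R) : Prop :=
  exists (y1 y2 y3 u : R),
    let f1 := eval3 (pd1 f) y1 y2 y3 in
    let f2 := eval3 (pd2 f) y1 y2 y3 in
    let f3 := eval3 (pd3 f) y1 y2 y3 in
    [/\ eval3 f y1 y2 y3 = 0,
        f1 * (x2 - y2) - f2 * (x1 - y1) = 0,
        f1 * (x3 - y3) - f3 * (x1 - y1) = 0,
        f2 * (x3 - y3) - f3 * (x2 - y2) = 0 &
        (x1 - y1) ^+ 2 + (x2 - y2) ^+ 2 + (x3 - y3) ^+ 2 - d ^+ 2 = 0 /\
        u * (f1 ^+ 2 + f2 ^+ 2 + f3 ^+ 2) - 1 = 0].

(* g is a (square-free) defining polynomial of the Zariski closure of the
   projection: a nonzero polynomial generating the vanishing ideal of it. *)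
Definition generic_offset_poly (R : comUnitRingType) (f : {poly {poly {poly R}}})
    (g : {poly {poly {poly {poly R}}}}) : Prop :=
  g != 0 /\
  forall p : {poly {poly {poly {poly R}}}},
    (forall d x1 x2 x3, offset_incidence f d x1 x2 x3 -> eval4 p d x1 x2 x3 = 0)
    <-> rdvd g p.

(* Main.v *)
Require Import Defs.
From HB Require Import structures.
From mathcomp Require Import all_boot all_order all_algebra.
From Stdlib Require Import Ring.
Import GRing.Theory.
Local Open Scope ring_scope.

Section Alg.
Variable R : fieldType.
Definition radd (x y : R) : R := x + y.
Definition rmul (x y : R) : R := x * y.
Definition ropp (x : R) : R := - x.
Definition rsub (x y : R) : R := x - y.
Definition rz : R := 0.
Definition ro : R := 1.
Lemma RT : @ring_theory (GRing.Field.sort R) rz ro radd rmul rsub ropp eq.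
Proof. rewrite /rz /ro /radd /rmul /rsub /ropp.
split; [exact: add0r|exact: addrC|exact: addrA|exact: mul1r|exact: mulrC|exact: mulrA|exact: mulrDl|by []|exact: subrr]. Qed.
Add Ring RR : RT.
Lemma toA (x y : R) : x + y = radd x y. Proof. by []. Qed.
Lemma toM (x y : R) : x * y = rmul x y. Proof. by []. Qed.
Lemma toO (x : R) : - x = ropp x. Proof. by []. Qed.
Lemma toZ : (0 : R) = rz. Proof. by []. Qed.
Lemma toU : (1 : R) = ro. Proof. by []. Qed.
Ltac rnorm := rewrite ?expr2 ?toA ?toM ?toO ?toZ ?toU;
  match goal with |- @eq _ ?a ?b => change (@eq (GRing.Field.sort R) a b) end.

Lemma path_inc (n1 n2 n3 a1 a2 a3 : R) :
  n1 * a2 - n2 * a1 = 0 -> n1 * a3 - n3 * a1 = 0 -> n2 * a3 - n3 * a2 = 0 ->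
  a1 ^+ 2 + a2 ^+ 2 + a3 ^+ 2 = 1 -> forall y1 y2 y3 e : R,
  [/\ n1 * ((y2 + a2 * e) - y2) - n2 * ((y1 + a1 * e) - y1) = 0,
      n1 * ((y3 + a3 * e) - y3) - n3 * ((y1 + a1 * e) - y1) = 0,
      n2 * ((y3 + a3 * e) - y3) - n3 * ((y2 + a2 * e) - y2) = 0 &
      ((y1 + a1 * e) - y1) ^+ 2 + ((y2 + a2 * e) - y2) ^+ 2 + ((y3 + a3 * e) - y3) ^+ 2 - e ^+ 2 = 0].
Proof.
move=> h12 h13 h23 hn y1 y2 y3 e; split.
- have -> : n1 * ((y2 + a2 * e) - y2) - n2 * ((y1 + a1 * e) - y1) = (n1 * a2 - n2 * a1) * e.
    rnorm; ring.
  by rewrite h12 mul0r.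
- have -> : n1 * ((y3 + a3 * e) - y3) - n3 * ((y1 + a1 * e) - y1) = (n1 * a3 - n3 * a1) * e.
    by rnorm; ring.
  by rewrite h13 mul0r.
- have -> : n2 * ((y3 + a3 * e) - y3) - n3 * ((y2 + a2 * e) - y2) = (n2 * a3 - n3 * a2) * e.
    by rnorm; ring.
  by rewrite h23 mul0r.
have -> : ((y1 + a1 * e) - y1) ^+ 2 + ((y2 + a2 * e) - y2) ^+ 2 + ((y3 + a3 * e) - y3) ^+ 2 - e ^+ 2
   = (a1 ^+ 2 + a2 ^+ 2 + a3 ^+ 2 - 1) * e ^+ 2.
  by rnorm; ring.
by rewrite hn subrr mul0r.
Qed.

Lemma case0 (n1 n2 n3 a1 a2 a3 : R) :
  n1 * a2 - n2 * a1 = 0 -> n1 * a3 - n3 * a1 = 0 -> n2 * a3 - n3 * a2 = 0 ->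
  a1 ^+ 2 + a2 ^+ 2 + a3 ^+ 2 = 0 -> n1 ^+ 2 + n2 ^+ 2 + n3 ^+ 2 != 0 ->
  [/\ a1 = 0, a2 = 0 & a3 = 0].
Proof.
move=> h12 h13 h23 ha hN.
set N := n1 ^+ 2 + n2 ^+ 2 + n3 ^+ 2 in hN.
set S := a1 * n1 + a2 * n2 + a3 * n3.
have e1 : a1 * N - n1 * S = - (n2 * (n1 * a2 - n2 * a1)) - n3 * (n1 * a3 - n3 * a1).
  by rewrite /N /S; rnorm; ring.
have e2 : a2 * N - n2 * S = n1 * (n1 * a2 - n2 * a1) - n3 * (n2 * a3 - n3 * a2).
  by rewrite /N /S; rnorm; ring.
have e3 : a3 * N - n3 * S = n1 * (n1 * a3 - n3 * a1) + n2 * (n2 * a3 - n3 * a2).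
  by rewrite /N /S; rnorm; ring.
rewrite h12 h13 h23 !mulr0 ?subr0 ?oppr0 ?addr0 ?sub0r in e1 e2 e3.
move/subr0_eq: e1 => e1; move/subr0_eq: e2 => e2; move/subr0_eq: e3 => e3.
have eS : S ^+ 2 * N = (a1 ^+ 2 + a2 ^+ 2 + a3 ^+ 2) * N ^+ 2.
  have -> : S ^+ 2 * N = (n1 * S) ^+ 2 + (n2 * S) ^+ 2 + (n3 * S) ^+ 2.
    by rewrite /N; rnorm; ring.
  rewrite -e1 -e2 -e3; rnorm; ring.
rewrite ha mul0r in eS.
have S0 : S = 0.
  by move/eqP: eS; rewrite mulf_eq0 (negbTE hN) orbF expf_eq0 /= => /eqP.
rewrite S0 !mulr0 in e1 e2 e3.
have z : forall a : R, a * N = 0 -> a = 0.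
  by move=> a /eqP; rewrite mulf_eq0 (negbTE hN) orbF => /eqP.
by split; apply: z.
Qed.

Lemma dir_unit (n1 n2 n3 s : R) : s ^+ 2 = n1 ^+ 2 + n2 ^+ 2 + n3 ^+ 2 -> s != 0 ->
  [/\ n1 * (n2 / s) - n2 * (n1 / s) = 0, n1 * (n3 / s) - n3 * (n1 / s) = 0,
      n2 * (n3 / s) - n3 * (n2 / s) = 0 & (n1 / s) ^+ 2 + (n2 / s) ^+ 2 + (n3 / s) ^+ 2 = 1].
Proof.
move=> hs s0; split; try by rnorm; ring.
have -> : (n1 / s) ^+ 2 + (n2 / s) ^+ 2 + (n3 / s) ^+ 2 = (n1 ^+ 2 + n2 ^+ 2 + n3 ^+ 2) * (s^-1) ^+ 2.
  by rnorm; ring.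
by rewrite -hs -exprMn mulfV // expr1n.
Qed.

Lemma dir_scale (n1 n2 n3 b1 b2 b3 d : R) : d != 0 ->
  n1 * b2 - n2 * b1 = 0 -> n1 * b3 - n3 * b1 = 0 -> n2 * b3 - n3 * b2 = 0 ->
  b1 ^+ 2 + b2 ^+ 2 + b3 ^+ 2 - d ^+ 2 = 0 ->
  [/\ n1 * (b2 / d) - n2 * (b1 / d) = 0, n1 * (b3 / d) - n3 * (b1 / d) = 0,
      n2 * (b3 / d) - n3 * (b2 / d) = 0 & (b1 / d) ^+ 2 + (b2 / d) ^+ 2 + (b3 / d) ^+ 2 = 1].
Proof.
move=> d0 h12 h13 h23 hn; split.
- have -> : n1 * (b2 / d) - n2 * (b1 / d) = (n1 * b2 - n2 * b1) / d by rnorm; ring.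
  by rewrite h12 mul0r.
- have -> : n1 * (b3 / d) - n3 * (b1 / d) = (n1 * b3 - n3 * b1) / d by rnorm; ring.
  by rewrite h13 mul0r.
- have -> : n2 * (b3 / d) - n3 * (b2 / d) = (n2 * b3 - n3 * b2) / d by rnorm; ring.
  by rewrite h23 mul0r.
have -> : (b1 / d) ^+ 2 + (b2 / d) ^+ 2 + (b3 / d) ^+ 2 = (b1 ^+ 2 + b2 ^+ 2 + b3 ^+ 2) * (d^-1) ^+ 2.
  by rnorm; ring.
by rewrite (subr0_eq hn) -exprMn mulfV // expr1n.
Qed.
End Alg.
Arguments path_inc {R n1 n2 n3 a1 a2 a3}.
Arguments case0 {R n1 n2 n3 a1 a2 a3}.
Arguments dir_unit {R n1 n2 n3 s}.
Arguments dir_scale {R n1 n2 n3 b1 b2 b3 d}.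

Definition map4 {A B : nzRingType} (phi : A -> B) (p : {poly {poly {poly {poly A}}}}) :
  {poly {poly {poly {poly B}}}} := map_poly (map_poly (map_poly (map_poly phi))) p.

Lemma map_polyC0 (A B : nzSemiRingType) (f : A -> B) c : f 0 = 0 -> map_poly f c%:P = (f c)%:P.
Proof. move=> f0; apply/polyP => i; rewrite coef_map_id0 // !coefC; by case: (i == 0)%N. Qed.

Lemma eval4_map (A B : comNzRingType) (phi : {rmorphism A -> B}) p d x1 x2 x3 :
  eval4 (map4 phi p) (phi d) (phi x1) (phi x2) (phi x3) = phi (eval4 p d x1 x2 x3).
Proof.
rewrite /eval4 /map4.
have E3 : (phi x3)%:P%:P%:P = map_poly (map_poly (map_poly phi)) x3%:P%:P%:P.
  by rewrite !map_polyC0 ?map_poly0 ?rmorph0.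
have E2 : (phi x2)%:P%:P = map_poly (map_poly phi) x2%:P%:P.
  by rewrite !map_polyC0 ?map_poly0 ?rmorph0.
have E1 : (phi x1)%:P = map_poly phi x1%:P.
  by rewrite !map_polyC0 ?map_poly0 ?rmorph0.
by rewrite E3 horner_map E2 horner_map E1 !horner_map.
Qed.

Lemma mapK1 (A B : nzSemiRingType) (f : B -> A) (g : A -> B) :
  f 0 = 0 -> (forall x, f (g x) = x) -> forall p, map_poly f (map_poly g p) = p.
Proof. move=> f0 fg p; rewrite -map_poly_comp_id0 //; apply: map_poly_id => x _ /=; exact: fg. Qed.

Lemma map4K (C : comNzRingType) (e : C) (p : {poly {poly {poly {poly C}}}}) :
  map4 (horner_eval e) (map4 polyC p) = p.
Proof.
rewrite /map4; apply: mapK1; first exact: map_poly0.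
move=> x; apply: mapK1; first exact: map_poly0.
move=> y; apply: mapK1; first exact: map_poly0.
move=> z; apply: mapK1; first by rewrite horner_evalE horner0.
by move=> c; rewrite horner_evalE hornerC.
Qed.

Lemma eval4_path (C : comNzRingType) (p : {poly {poly {poly {poly C}}}}) D X1 X2 X3 e :
  (eval4 (map4 polyC p) D X1 X2 X3).[e] = eval4 p D.[e] X1.[e] X2.[e] X3.[e].
Proof.
have := @eval4_map _ _ (horner_eval e) (map4 polyC p) D X1 X2 X3.
rewrite map4K => H; exact: (esym H).
Qed.

Lemma eval4M (C : comNzRingType) (p q : {poly {poly {poly {poly C}}}}) d x1 x2 x3 :
  eval4 (p * q) d x1 x2 x3 = eval4 p d x1 x2 x3 * eval4 q d x1 x2 x3.
Proof. by rewrite /eval4 !hornerM. Qed.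

Lemma eval4C (C : comNzRingType) (c : {poly C}) d x1 x2 x3 :
  eval4 c%:P%:P%:P d x1 x2 x3 = c.[d].
Proof. by rewrite /eval4 !hornerC. Qed.

Lemma eval4_1 (C : comNzRingType) d x1 x2 x3 : eval4 (1 : {poly {poly {poly {poly C}}}}) d x1 x2 x3 = 1.
Proof. by rewrite /eval4 !hornerE. Qed.

Theorem mainTheorem7 (C : closedFieldType) (charC0 : [pchar C] =i pred0)
  (f : {poly {poly {poly C}}})
  (f_irr : irreducible_elt f)
  (h_nonzero_on_surface : exists y1 y2 y3 : C,
      eval3 f y1 y2 y3 = 0 /\
      (eval3 (pd1 f) y1 y2 y3) ^+ 2 + (eval3 (pd2 f) y1 y2 y3) ^+ 2
        + (eval3 (pd3 f) y1 y2 y3) ^+ 2 != 0)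
  (g : {poly {poly {poly {poly C}}}})
  (g_def : generic_offset_poly f g) :
  forall q : {poly C}, rdvd (q%:P%:P%:P) g -> (size q <= 1)%N.
Proof.
move=> q [r Hg]; rewrite leqNgt; apply/negP => Hq.
have [d0 /factor_theorem [q1 Hq1]] : exists d0, root q d0.
  by apply/closed_rootP; rewrite neq_ltn Hq orbT.
case: g_def => gnz gdef.
set L : {poly {poly {poly {poly C}}}} := ('X - d0%:P)%:P%:P%:P.
set g' : {poly {poly {poly {poly C}}}} := q1%:P%:P%:P * r.
have Hgg : g = L * g'.
  by rewrite Hg Hq1 /L /g' !polyCM [_ * ('X - d0%:P)%:P%:P%:P]mulrC mulrA.
have vanish_g : forall d x1 x2 x3, offset_incidence f d x1 x2 x3 -> eval4 g d x1 x2 x3 = 0.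
  by apply/(gdef g); exists 1; rewrite mulr1.
have key1 : forall d x1 x2 x3, offset_incidence f d x1 x2 x3 -> d != d0 ->
    eval4 g' d x1 x2 x3 = 0.
  move=> d x1 x2 x3 Hi Hd; have := vanish_g _ _ _ _ Hi.
  rewrite Hgg eval4M /L eval4C hornerXsubC => /eqP.
  by rewrite mulf_eq0 subr_eq0 (negbTE Hd) /= => /eqP.
have path : forall y1 y2 y3 a1 a2 a3,
    eval3 f y1 y2 y3 = 0 ->
    (eval3 (pd1 f) y1 y2 y3) ^+ 2 + (eval3 (pd2 f) y1 y2 y3) ^+ 2
        + (eval3 (pd3 f) y1 y2 y3) ^+ 2 != 0 ->
    eval3 (pd1 f) y1 y2 y3 * a2 - eval3 (pd2 f) y1 y2 y3 * a1 = 0 ->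
    eval3 (pd1 f) y1 y2 y3 * a3 - eval3 (pd3 f) y1 y2 y3 * a1 = 0 ->
    eval3 (pd2 f) y1 y2 y3 * a3 - eval3 (pd3 f) y1 y2 y3 * a2 = 0 ->
    a1 ^+ 2 + a2 ^+ 2 + a3 ^+ 2 = 1 ->
    forall e, offset_incidence f e (y1 + a1 * e) (y2 + a2 * e) (y3 + a3 * e).
  move=> y1 y2 y3 a1 a2 a3 Hf HN h12 h13 h23 ha e.
  have [c12 c13 c23 cn] := path_inc h12 h13 h23 ha y1 y2 y3 e.
  exists y1, y2, y3, (((eval3 (pd1 f) y1 y2 y3) ^+ 2 + (eval3 (pd2 f) y1 y2 y3) ^+ 2
        + (eval3 (pd3 f) y1 y2 y3) ^+ 2)^-1).
  by split => //; split => //; rewrite mulVf // subrr.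
have key2 : forall y1 y2 y3 a1 a2 a3,
    eval3 f y1 y2 y3 = 0 ->
    (eval3 (pd1 f) y1 y2 y3) ^+ 2 + (eval3 (pd2 f) y1 y2 y3) ^+ 2
        + (eval3 (pd3 f) y1 y2 y3) ^+ 2 != 0 ->
    eval3 (pd1 f) y1 y2 y3 * a2 - eval3 (pd2 f) y1 y2 y3 * a1 = 0 ->
    eval3 (pd1 f) y1 y2 y3 * a3 - eval3 (pd3 f) y1 y2 y3 * a1 = 0 ->
    eval3 (pd2 f) y1 y2 y3 * a3 - eval3 (pd3 f) y1 y2 y3 * a2 = 0 ->
    a1 ^+ 2 + a2 ^+ 2 + a3 ^+ 2 = 1 ->
    eval4 g' d0 (y1 + a1 * d0) (y2 + a2 * d0) (y3 + a3 * d0) = 0.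
  move=> y1 y2 y3 a1 a2 a3 Hf HN h12 h13 h23 ha.
  set P := eval4 (map4 polyC g') 'X (y1%:P + a1%:P * 'X) (y2%:P + a2%:P * 'X)
             (y3%:P + a3%:P * 'X).
  have HP : forall e, P.[e] = eval4 g' e (y1 + a1 * e) (y2 + a2 * e) (y3 + a3 * e).
    by move=> e; rewrite /P eval4_path !hornerE.
  have P0 : P = 0.
    apply/eqP; apply: contraT => Pnz.
    have [e] : exists e, root (('X - d0%:P) * P - 1) e.
      apply/closed_rootP.
      rewrite size_polyDl ?size_mul ?size_XsubC ?polyXsubC_eq0 //=.
        by move: Pnz; rewrite -size_poly_eq0; case: (size P) => [|k] //= _; rewrite addnS.
      rewrite size_polyN size_poly1; move: Pnz; rewrite -size_poly_eq0.
      by case: (size P) => [|k] //= _; rewrite addnS.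
    rewrite /root !hornerE.
    have [->|Hne] := eqVneq e d0.
      by rewrite subrr mul0r sub0r oppr_eq0 oner_eq0.
    by rewrite HP key1 ?mulr0 ?sub0r ?oppr_eq0 ?oner_eq0 //; apply: path.
  by rewrite -HP P0 horner0.
have claim : forall d x1 x2 x3, offset_incidence f d x1 x2 x3 -> eval4 g' d x1 x2 x3 = 0.
  move=> d x1 x2 x3 Hi.
  have [Hd|/key1 -> //] := eqVneq d d0; subst d.
  case: Hi => [y1 [y2 [y3 [u]]]] /=.
  set n1 := eval3 (pd1 f) y1 y2 y3; set n2 := eval3 (pd2 f) y1 y2 y3;
  set n3 := eval3 (pd3 f) y1 y2 y3.
  case=> Hf c12 c13 c23 [Hn Hu].
  have HN : n1 ^+ 2 + n2 ^+ 2 + n3 ^+ 2 != 0.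
    apply/negP => /eqP H0; move: Hu; rewrite H0 mulr0 sub0r => /eqP.
    by rewrite oppr_eq0 oner_eq0.
  have [d00|dnz] := eqVneq d0 0.
    subst d0.
    have Hn0 : (x1 - y1) ^+ 2 + (x2 - y2) ^+ 2 + (x3 - y3) ^+ 2 = 0.
      by move: Hn; rewrite expr0n /= subr0.
    have [a10 a20 a30] := case0 c12 c13 c23 Hn0 HN.
    have [s] : exists s, root ('X^2 - (n1 ^+ 2 + n2 ^+ 2 + n3 ^+ 2)%:P) s.
      by apply/closed_rootP; rewrite size_XnsubC.
    rewrite /root !hornerE => /eqP /subr0_eq hs.
    have s0 : s != 0.
      by apply/negP => /eqP s0; move: HN; rewrite -hs s0 expr0n /= eqxx.
    have [d12 d13 d23 dn] := dir_unit hs s0.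
    have := key2 y1 y2 y3 _ _ _ Hf HN d12 d13 d23 dn.
    rewrite !mulr0 !addr0.
    by rewrite (subr0_eq a10) (subr0_eq a20) (subr0_eq a30).
  have [d12 d13 d23 dn] := dir_scale dnz c12 c13 c23 Hn.
  have := key2 y1 y2 y3 _ _ _ Hf HN d12 d13 d23 dn.
  by rewrite !divfK // ![y1 + _]addrC ![y2 + _]addrC ![y3 + _]addrC !subrK.
have [s Hs] : rdvd g g' by apply/gdef.
have Ls : L * s = 1.
  by apply: (mulfI gnz); rewrite mulr1 mulrCA -Hs -Hgg.
have EL : eval4 L d0 0 0 0 = 0 by rewrite /L eval4C hornerXsubC subrr.
have H0 : (0 : C) = 1.
  have H1 := @eval4M C L s d0 0 0 0.
  have H2 : eval4 (L * s) d0 0 0 0 = 1.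
    rewrite Ls; exact: eval4_1.
  rewrite EL (mul0r (eval4 s d0 0 0 0)) in H1; exact: etrans (esym H1) H2.
by move/eqP: H0; rewrite eq_sym oner_eq0.
Qed.
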